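(* Let $H=(V,E)$ be a finite simple graph, and let $M$ be a maximum $2$-matching of $H$ such that no singleton of $M$ has an A-alternating path saving it. Then the number of singletons of $M$ equals the minimum, over all path covers of $H$, of the number of $0$-paths in the path cover. In particular, deleting one edge from each cycle component of $(V,M)$ yields a path cover of $H$ with the minimum possible number of $0$-paths.
   Context: A path cover of $H$ is a collection of vertex-disjoint paths in $H$ that together cover all vertices. A single vertex counts as a $0$-path, and a $k$-path has $k$ edges. A $2$-matching of $H$ is a set $M\subseteq E$ in which every vertex is incident to at most two edges of $M$. It is maximum if $|M|$ is as large as possible. The components of $(V,M)$ are paths and cycles. A singleton of $M$ is a vertex of degree $0$ in $M$. Given a maximum $2$-matching $M$ and a singleton $v_0$ of $M$, an A-alternating path saving $v_0$ is a sequence of pairwise distinct vertices $v_0,v_1,\dots,v_{2i+2}$, with $i\ge 0$, satisfying: (1) $v_{2j}v_{2j+1}\in E\setminus M$ for every $j=0,\dots,i$; (2) for every $j=1,\dots,i$ there is a component $P_j$ of $(V,M)$ that is a $2$-path, with $v_{2j-1}$ its middle vertex and $v_{2j}$ one of its two endpoints, and $P_1,\dots,P_i$ are pairwise distinct; (3) $v_{2i+1}$ lies on a component $Q$ of $(V,M)$ that is either a cycle or a path with at least $3$ edges, $v_{2i+1}v_{2i+2}\in M$, and if $Q$ is a path then $v_{2i+2}$ is not an endpoint of $Q$. *)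

(* Defs.v *)
From HB Require Import structures.
From mathcomp Require Import all_boot.
Set Implicit Arguments. Unset Strict Implicit. Unset Printing Implicit Defensive.

(* A finite simple graph H = (V,E) is given by a vertex type T : finType and a
   symmetric irreflexive adjacency relation adj.  Edges are 2-element sets. *)
Definition edges (T : finType) (adj : rel T) : {set {set T}} :=
  [set e | [exists x, exists y, adj x y && (e == [set x; y])]].

Definition mdeg (T : finType) (M : {set {set T}}) (x : T) : nat :=
  #|[set e in M | x \in e]|.

Definition two_matching (T : finType) (adj : rel T) (M : {set {set T}}) : bool :=
  (M \subset edges adj) && [forall x, mdeg M x <= 2].

Definition max_two_matching (T : finType) (adj : rel T) (M : {set {set T}}) : Prop :=
  two_matching adj M /\
  forall M' : {set {set T}}, two_matching adj M' -> #|M'| <= #|M|.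

Definition singleton (T : finType) (M : {set {set T}}) (x : T) : bool :=
  mdeg M x == 0.

Definition Mrel (T : finType) (M : {set {set T}}) : rel T :=
  fun x y => [set x; y] \in M.

Definition mcomp (T : finType) (M : {set {set T}}) (x : T) : {set T} :=
  [set y | connect (Mrel M) x y].

Definition comp_nedges (T : finType) (M : {set {set T}}) (C : {set T}) : nat :=
  #|[set e in M | e \subset C]|.

(* a component of (V,M) (M a 2-matching) is a cycle iff all its vertices have
   M-degree 2; otherwise it is a path *)
Definition is_cycle_comp (T : finType) (M : {set {set T}}) (C : {set T}) : bool :=
  [forall y in C, mdeg M y == 2].

Definition is_path_comp (T : finType) (M : {set {set T}}) (C : {set T}) : bool :=
  ~~ is_cycle_comp M C.

Definition is_endpoint (T : finType) (M : {set {set T}}) (x : T) : bool :=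
  mdeg M x <= 1.

Definition A_alt_path_saving (T : finType) (adj : rel T) (M : {set {set T}}) (v0 : T)
  : Prop :=
  exists (i : nat) (v : nat -> T),
    v 0 = v0 /\
    (forall a b, a <= 2 * i + 2 -> b <= 2 * i + 2 -> v a = v b -> a = b) /\
    [/\
         (forall j, j <= i -> [set v (2 * j); v (2 * j + 1)] \in edges adj :\: M),
        (forall j, 1 <= j <= i ->
           let P := mcomp M (v (2 * j - 1)) in
           [&& is_path_comp M P, comp_nedges M P == 2,
               mdeg M (v (2 * j - 1)) == 2, v (2 * j) \in P
             & is_endpoint M (v (2 * j))]),
        (forall j k, 1 <= j <= i -> 1 <= k <= i ->
           mcomp M (v (2 * j - 1)) = mcomp M (v (2 * k - 1)) -> j = k)
      &
        let Q := mcomp M (v (2 * i + 1)) in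
        [/\ is_cycle_comp M Q || (3 <= comp_nedges M Q),
            [set v (2 * i + 1); v (2 * i + 2)] \in M
          & is_path_comp M Q -> ~~ is_endpoint M (v (2 * i + 2))]].

Definition gpath (T : finType) (adj : rel T) (p : seq T) : bool :=
  if p is x :: q then path adj x q && uniq p else false.

Definition path_cover (T : finType) (adj : rel T) (ps : seq (seq T)) : bool :=
  [&& all (gpath adj) ps, uniq (flatten ps) & [forall x, x \in flatten ps]].

Definition n_zero_paths (T : finType) (ps : seq (seq T)) : nat :=
  count (fun p => size p == 1) ps.

Definition pc_edges (T : finType) (ps : seq (seq T)) : {set {set T}} :=
  [set e | e \in flatten [seq [seq [set ab.1; ab.2] | ab <- zip p (behead p)] | p <- ps]].

(* Main.v *)
Require Import Defs.
From HB Require Import structures.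
From mathcomp Require Import all_boot zify.
Set Implicit Arguments. Unset Strict Implicit. Unset Printing Implicit Defensive.

Lemma mem_edgesP (T : finType) (adj : rel T) e :
  reflect (exists x y, adj x y /\ e = [set x; y]) (e \in edges adj).
Proof.
rewrite inE; apply: (iffP existsP).
  by case=> x /existsP [y /andP [h /eqP ->]]; exists x, y.
by case=> x [y [h ->]]; exists x; apply/existsP; exists y; rewrite h eqxx.
Qed.

Lemma edge_other (T : finType) (adj : rel T) (adj_sym : symmetric adj) e v :
  e \in edges adj -> v \in e -> exists w, adj v w /\ e = [set v; w].
Proof.
case/mem_edgesP=> x [y [h ->]]; rewrite !inE => /orP [] /eqP ->.
  by exists y.
by exists x; rewrite adj_sym setUC.
Qed.

Lemma adj_neq (T : finType) (adj : rel T) (adj_irr : irreflexive adj) x y :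
  adj x y -> x != y.
Proof. by apply: contraTneq => ->; rewrite adj_irr. Qed.

Lemma set2_eq1 (T : finType) (x y z : T) : x != y -> [set x; y] = [set x; z] -> y = z.
Proof.
move=> nxy h; have : y \in [set x; z] by rewrite -h !inE eqxx orbT.
rewrite !inE => /orP [/eqP yx|/eqP //]; by rewrite yx eqxx in nxy.
Qed.

Lemma mdegE (T : finType) (M : {set {set T}}) x : mdeg M x = #|[set e in M | x \in e]|.
Proof. by []. Qed.

Lemma mdeg_sub (T : finType) (A B : {set {set T}}) x : A \subset B -> mdeg A x <= mdeg B x.
Proof.
move=> sAB; apply: subset_leq_card; apply/subsetP=> e; rewrite !inE => /andP [eA ->].
by rewrite (subsetP sAB).
Qed.

Lemma mdeg_gt0 (T : finType) (M : {set {set T}}) x :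
  reflect (exists2 e, e \in M & x \in e) (0 < mdeg M x).
Proof.
rewrite /mdeg card_gt0; apply: (iffP (set0Pn _)).
  by case=> e; rewrite inE => /andP [] ?; exists e.
by case=> e ? ?; exists e; rewrite inE; apply/andP.
Qed.

Lemma mdegU1 (T : finType) (M : {set {set T}}) e x :
  mdeg (e |: M) x = mdeg M x + ((x \in e) && (e \notin M)).
Proof.
rewrite /mdeg; case xe: (x \in e) => /=.
  have -> : [set f in e |: M | x \in f] = e |: [set f in M | x \in f].
    by apply/setP=> f; rewrite !inE; case: (f =P e) => [->|]; rewrite ?xe ?andbT.
  by rewrite cardsU1 inE xe andbT addnC.
rewrite addn0; apply: eq_card => f; rewrite !inE.
by case: (f =P e) => [->|] //=; rewrite xe !andbF.
Qed.

Lemma mdegD1 (T : finType) (M : {set {set T}}) e x :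
  mdeg (M :\ e) x = mdeg M x - ((x \in e) && (e \in M)).
Proof.
rewrite /mdeg; case xe: (x \in e) => /=; last first.
  rewrite subn0; apply: eq_card => f; rewrite !inE.
  by case: (f =P e) => [->|] //=; rewrite xe !andbF.
have -> : [set f in M :\ e | x \in f] = [set f in M | x \in f] :\ e.
  by apply/setP=> f; rewrite !inE andbA.
rewrite (cardsD1 e [set f in M | x \in f]) inE xe andbT.
by case: (e \in M) => //=; rewrite ?subn0 // addKn.
Qed.

Lemma in_set2x (T : finType) (x y : T) : x \in [set x; y].
Proof. by rewrite !inE eqxx. Qed.
Lemma in_set2y (T : finType) (x y : T) : y \in [set x; y].
Proof. by rewrite !inE eqxx orbT. Qed.

Definition mid (T : finType) (M : {set {set T}}) (m : T) : bool :=
  (mdeg M m == 2) && [forall y, ([set m; y] \in M) ==> (mdeg M y == 1)].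

Inductive reach (T : finType) (adj : rel T) (M : {set {set T}}) : T -> Prop :=
| reachS x : singleton M x -> reach adj M x
| reachT x m z : reach adj M x -> adj x m -> [set x; m] \notin M -> mid M m ->
    [set m; z] \in M -> reach adj M z.

Definition bad (T : finType) (adj : rel T) (M : {set {set T}}) : Prop :=
  exists x y z, reach adj M x /\ adj x y /\ [set x; y] \notin M /\ mdeg M y = 2 /\
                    [set y; z] \in M /\ mdeg M z = 2.

Lemma mdeg1_uniq (T : finType) (M : {set {set T}}) x g1 g2 :
  mdeg M x = 1 -> g1 \in M -> x \in g1 -> g2 \in M -> x \in g2 -> g1 = g2.
Proof.
rewrite /mdeg => /eqP/cards1P [g E] h1 x1 h2 x2.
have : g1 \in [set g] by rewrite -E inE h1 x1.
have : g2 \in [set g] by rewrite -E inE h2 x2.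
by rewrite !inE => /eqP -> /eqP ->.
Qed.

Lemma singleton_notin (T : finType) (M : {set {set T}}) x g :
  singleton M x -> g \in M -> x \notin g.
Proof.
rewrite /singleton => /eqP h gM; apply/negP => xg.
have : 0 < mdeg M x by apply/mdeg_gt0; exists g.
by rewrite h.
Qed.



Lemma swap_mdeg (T : finType) (M : {set {set T}}) (v0 v1 c x : T) :
  [set v0; v1] \notin M -> [set v1; c] \in M ->
  mdeg ([set v0; v1] |: (M :\ [set v1; c])) x =
  mdeg M x - (x \in [set v1; c]) + (x \in [set v0; v1]).
Proof.
move=> eM fM; rewrite mdegU1 mdegD1 fM andbT; congr (_ + _).
by rewrite !inE (negbTE eM) andbF andbT.
Qed.

Lemma swap_bad (T : finType) (adj : rel T) (adj_sym : symmetric adj)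
  (adj_irr : irreflexive adj) (M : {set {set T}}) (v0 v1 c : T) :
  two_matching adj M -> singleton M v0 -> adj v0 v1 -> mid M v1 ->
  adj v1 c -> [set v1; c] \in M ->
  bad adj ([set v0; v1] |: (M :\ [set v1; c])) -> bad adj M.
Proof.
move=> /andP [ME /forallP Mdeg] s0 a01 mid1 a1c fM.
set e := [set v0; v1]; set f := [set v1; c]; set M' := e |: (M :\ f).
have eM : e \notin M.
  by apply/negP => eM; move: (singleton_notin s0 eM); rewrite in_set2x.
have dE x : mdeg M' x = mdeg M x - (x \in f) + (x \in e) by exact: swap_mdeg.
have n01 : v0 != v1 by exact: adj_neq.
have n1c : v1 != c by exact: adj_neq.
have n0c : v0 != c.
  by apply: contraTneq (singleton_notin s0 fM) => ->; rewrite in_set2y.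
move: mid1 => /andP [/eqP d1 /forallP m1].
have dc : mdeg M c = 1 by apply/eqP; move: (m1 c); rewrite fM.
have d0 : mdeg M v0 = 0 by apply/eqP.
have d'0 : mdeg M' v0 = 1.
  by rewrite dE d0 !inE eqxx (negbTE n01) (negbTE n0c).
have d'1 : mdeg M' v1 = 2 by rewrite dE d1 !inE eqxx orbT.
have d'c : mdeg M' c = 0.
  by rewrite dE dc !inE eqxx orbT eq_sym (negbTE n0c) eq_sym (negbTE n1c).
have dO x : x != v0 -> x != c -> mdeg M' x = mdeg M x.
  move=> h0 hc; rewrite dE !inE (negbTE h0) (negbTE hc) /= orbF.
  case: (x =P v1) => [->|_]; last by rewrite subn0 addn0.
  by rewrite d1.
have inM' g : (g \in M') = (g == e) || ((g != f) && (g \in M)).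
  by rewrite !inE.
have rc : reach adj M c.
  by apply: (@reachT _ _ _ v0 v1 c) => //; [exact: reachS|rewrite /mid d1 eqxx; exact/forallP].
have rv z : [set v1; z] \in M -> reach adj M z.
  move=> h; apply: (@reachT _ _ _ v0 v1 z) => //; first exact: reachS.
  by rewrite /mid d1 eqxx; apply/forallP.
have midE m : mid M' m -> m != v1 -> mid M m.
  case/andP=> /eqP dm /forallP hm nm1.
  have nm0 : m != v0 by apply/eqP => em; rewrite em d'0 in dm.
  have nmc : m != c by apply/eqP => em; rewrite em d'c in dm.
  apply/andP; split; first by rewrite -dO // dm.
  apply/forallP=> y; apply/implyP=> my.
  have myf : [set m; y] != f.
    by apply: contraNneq nm1 => h; move: (in_set2x m y); rewrite h !inE (negbTE nmc) orbF.
  have my' : [set m; y] \in M' by rewrite inM' myf my orbT.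
  move: (hm y); rewrite my' /= => /eqP dy.
  have ny0 : y != v0.
    by apply: contraTneq (singleton_notin s0 my) => ->; rewrite in_set2y.
  have nyc : y != c by apply/eqP => em; rewrite em d'c in dy.
  by rewrite -dO // dy.
have reachE x : reach adj M' x -> reach adj M x.
  elim=> {x} [x sx | x m z _ IH axm xm midm mz].
    case: (x =P c) => [->|/eqP nxc] //.
    have nx0 : x != v0 by apply: contraTneq sx => ->; rewrite /singleton d'0.
    by apply: reachS; rewrite /singleton -dO.
  case: (m =P v1) => [em|/eqP nm1].
    move: mz; rewrite em inM' => /orP [/eqP h|/andP [_ h]]; last exact: rv.
    have : z \in e by rewrite -h in_set2y.
    rewrite !inE => /orP [/eqP ->|/eqP zv1]; first exact: reachS.
    by move: (in_set2x v0 v1); rewrite -/e -h zv1 !inE orbb (negbTE n01).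
  move: (midE m midm nm1) => midM.
  have nm0 : m != v0 by apply: contraTneq (midm) => ->; rewrite /mid d'0.
  have nmc : m != c by apply: contraTneq (midm) => ->; rewrite /mid d'c.
  have mz' : [set m; z] \in M.
    move: mz; rewrite inM' => /orP [/eqP h|/andP [_ //]].
    by move: (in_set2x m z); rewrite h !inE (negbTE nm0) (negbTE nm1).
  have xm' : [set x; m] \notin M.
    apply: contra xm => h; rewrite inM' h andbT; apply/orP; right.
    by apply: contraNneq nm1 => h'; move: (in_set2y x m); rewrite h' !inE (negbTE nmc) orbF.
  exact: (reachT IH axm xm' midM mz').
case=> x [y [z [rx [axy [xy [dy [yz dz]]]]]]].
have ny0 : y != v0 by apply/eqP => em; rewrite em d'0 in dy.
have nyc : y != c by apply/eqP => em; rewrite em d'c in dy.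
have nz0 : z != v0 by apply/eqP => em; rewrite em d'0 in dz.
have nzc : z != c by apply/eqP => em; rewrite em d'c in dz.
have yzM : [set y; z] \in M.
  move: yz; rewrite inM' => /orP [/eqP h|/andP [_ //]].
  by move: (in_set2x v0 v1); rewrite -/e -h !inE eq_sym (negbTE ny0) eq_sym (negbTE nz0).
exists x, y, z; split; first exact: reachE.
split=> //; split; last first.
  by rewrite -dO // -dO //.
apply/negP=> xyM; move: xy; rewrite inM' xyM andbT => /norP [_ /negPn /eqP h].
have yv1 : y = v1.
  by move: (in_set2y x y); rewrite h !inE (negbTE nyc) orbF => /eqP.
move: yz; rewrite yv1 inM' => /orP [/eqP h'|/andP [_ h']].
  have : z \in e by rewrite -h' in_set2y.
  rewrite !inE (negbTE nz0) /= => /eqP zv1.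
  by move: (in_set2x v0 v1); rewrite -/e -h' zv1 !inE orbb (negbTE n01).
by move: (m1 z); rewrite h' /= -dO // dz.
Qed.

Lemma cards3 (T : finType) (a b c : T) :
  a != b -> a != c -> b != c -> #|[set a; b; c]| = 3.
Proof.
move=> ab ac bc; rewrite -setUA cardsU1 cards2 bc !inE (negbTE ab) (negbTE ac).
by [].
Qed.

Lemma mdeg2P (T : finType) (M : {set {set T}}) x :
  mdeg M x = 2 -> exists e1 e2, [/\ e1 != e2, e1 \in M, x \in e1, e2 \in M & x \in e2] /\
    forall g, g \in M -> x \in g -> g = e1 \/ g = e2.
Proof.
rewrite /mdeg => /eqP /cards2P [e1 [e2 [ne E]]].
have : e1 \in [set g in M | x \in g] by rewrite E in_set2x.
have : e2 \in [set g in M | x \in g] by rewrite E in_set2y.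
rewrite !inE => /andP [e2M xe2] /andP [e1M xe1].
exists e1, e2; split => // g gM xg.
have : g \in [set g in M | x \in g] by rewrite inE gM.
by rewrite E !inE => /orP [] /eqP; [left|right].
Qed.

Lemma core (T : finType) (adj : rel T) (adj_sym : symmetric adj)
  (adj_irr : irreflexive adj) (F : {set {set T}}) (HF : two_matching adj F) n :
  forall M : {set {set T}}, #|F :\: M| <= n -> two_matching adj M ->
  (forall M', two_matching adj M' -> #|M'| <= #|M|) -> ~ bad adj M ->
  #|[set x | singleton M x]| <= #|[set x | singleton F x]|.
Proof.
elim: n => [|n IH] M hn HM Mmax Mbad; rewrite leqNgt; apply/negP => hlt;
  (have [v0 v0S v0F] : exists2 v0, v0 \in [set x | singleton M x] &
     v0 \notin [set x | singleton F x]
     by apply/subsetPn; apply: contraTN hlt => /subset_leq_card; rewrite leqNgt);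
  move: v0S v0F; rewrite !inE => s0 nsF;
  (have [e eF v0e] : exists2 e, e \in F & v0 \in e
     by apply/mdeg_gt0; rewrite lt0n);
  case/andP: (HF) => FE /forallP Fdeg;
  case/andP: (HM) => ME /forallP Mdeg;
  (have [v1 [a01 ee]] := edge_other adj_sym (subsetP FE _ eF) v0e);
  (have eM : e \notin M by apply/negP => eM; move: (singleton_notin s0 eM); rewrite v0e);
  (have eFM : e \in F :\: M by rewrite inE eM eF).
- by move: hn; rewrite leqn0 => /eqP/cards0_eq h; rewrite h inE in eFM.
have d1 : mdeg M v1 = 2.
  apply/eqP; rewrite eqn_leq Mdeg /= leqNgt; apply/negP => d1.
  have HM' : two_matching adj (e |: M).
    apply/andP; split.
      apply/subsetP=> g; rewrite in_setU1 => /orP [/eqP ->|/(subsetP ME) //].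
      exact: (subsetP FE).
    apply/forallP=> x; rewrite mdegU1 eM andbT ee !inE.
    case: (x =P v0) => [->|_]; first by move: s0; rewrite /singleton => /eqP ->.
    case: (x =P v1) => [->|_] //=; last by rewrite addn0.
    by rewrite addn1.
  by move: (Mmax _ HM'); rewrite cardsU1 eM add1n ltnn.
have [e1 [e2 [[ne12 e1M v1e1 e2M v1e2] E12]]] := mdeg2P d1.
have [a [a1a e1E]] := edge_other adj_sym (subsetP ME _ e1M) v1e1.
have [b [a1b e2E]] := edge_other adj_sym (subsetP ME _ e2M) v1e2.
have nab : a != b by apply: contraNneq ne12 => ab; rewrite e1E e2E ab.
have dab x : [set v1; x] \in M -> mdeg M x != 2.
  move=> hx; apply/negP => /eqP dx; apply: Mbad; exists v0, v1, x.
  by rewrite -ee; do !split => //; exact: reachS.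
have d1x x : [set v1; x] \in M -> mdeg M x = 1.
  move=> hx; apply/eqP; rewrite eqn_leq -ltnS ltn_neqAle dab //= Mdeg /=.
  by apply/mdeg_gt0; exists [set v1; x]; rewrite ?in_set2y.
have mid1 : mid M v1 by rewrite /mid d1 eqxx; apply/forallP => x; apply/implyP=> /d1x ->.
have [c [a1c cM cF]] : exists c, [/\ adj v1 c, [set v1; c] \in M & [set v1; c] \notin F].
  case aF : ([set v1; a] \in F); last by exists a; rewrite aF -e1E e1M.
  case bF : ([set v1; b] \in F); last by exists b; rewrite bF -e2E e2M.
  have n0a : v0 != a by apply: contraTneq (singleton_notin s0 e1M) => ->; rewrite e1E in_set2y.
  have n0b : v0 != b by apply: contraTneq (singleton_notin s0 e2M) => ->; rewrite e2E in_set2y.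
  have n01 : v0 != v1 by exact: adj_neq.
  have ne1 : e != [set v1; a].
    apply: contraNneq n0a => h; move: (in_set2x v0 v1); rewrite -ee h !inE (negbTE n01) /=.
    by move/eqP ->.
  have ne2 : e != [set v1; b].
    apply: contraNneq n0b => h; move: (in_set2x v0 v1); rewrite -ee h !inE (negbTE n01) /=.
    by move/eqP ->.
  have : #|[set e; [set v1; a]; [set v1; b]]| <= mdeg F v1.
    apply: subset_leq_card; apply/subsetP => g; rewrite !inE => /orP [/orP [] |] /eqP ->.
    - by rewrite eF ee in_set2y.
    - by rewrite aF in_set2x.
    - by rewrite bF in_set2x.
  rewrite cards3 // -?e1E -?e2E //.
  by move=> h; move: (leq_trans h (Fdeg v1)).
set M' := e |: (M :\ [set v1; c]).
have dc : mdeg M c = 1 by exact: d1x.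
have n01 : v0 != v1 by exact: adj_neq.
have n1c : v1 != c by exact: adj_neq.
have n0c : v0 != c.
  by apply: contraTneq (singleton_notin s0 cM) => ->; rewrite in_set2y.
have dE x : mdeg M' x = mdeg M x - (x \in [set v1; c]) + (x \in [set v0; v1]).
  by rewrite /M' ee; apply: swap_mdeg; rewrite -?ee.
have HM' : two_matching adj M'.
  apply/andP; split.
    apply/subsetP=> g; rewrite in_setU1 => /orP [/eqP ->|]; first exact: (subsetP FE).
    by rewrite in_setD1 => /andP [_ /(subsetP ME)].
  apply/forallP=> x; rewrite dE !inE.
  case: (x =P v0) => [->|/eqP nx0]; first by move: s0; rewrite /singleton => /eqP ->; rewrite (negbTE n01) (negbTE n0c).
  case: (x =P v1) => [->|/eqP nx1] /=; first by rewrite d1.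
  by rewrite addn0; apply: leq_trans (leq_subr _ _) (Mdeg x).
have cardM' : #|M'| = #|M|.
  rewrite /M' cardsU1 in_setD1 (negbTE eM) andbF /=.
  by rewrite (cardsD1 [set v1; c] M) cM.
have Mbad' : ~ bad adj M'.
  move=> bM'; apply: Mbad; apply: (@swap_bad _ _ adj_sym adj_irr M v0 v1 c) => //.
  by rewrite -ee.
have hn' : #|F :\: M'| <= n.
  have : #|F :\: M'| <= #|(F :\: M) :\ e|.
    apply: subset_leq_card; apply/subsetP => g; rewrite !inE negb_or negb_and negbK.
    case/andP=> /andP [nge] /orP [/eqP gc|ngM] gF; last by rewrite nge ngM gF.
    by move: cF; rewrite -gc gF.
  move/leq_trans; apply; move: hn; rewrite (cardsD1 e (F :\: M)) eFM.
  by rewrite add1n ltnS.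
have := IH M' hn' HM' (fun M'' h => leq_trans (Mmax M'' h) (eq_leq (esym cardM'))) Mbad'.
move=> h; move: hlt; rewrite ltnNge => /negP; apply; apply: leq_trans h.
have : c |: ([set x | singleton M x] :\ v0) \subset [set x | singleton M' x].
  apply/subsetP=> x; rewrite !inE /singleton dE => /orP [/eqP ->|/andP [nx0 /eqP dx0]].
    by rewrite dc in_set2y !inE (eq_sym c v0) (eq_sym c v1) (negbTE n0c) (negbTE n1c).
  case: (x =P v1) => [xv1|/eqP nx1]; first by rewrite xv1 d1 in dx0.
  by rewrite dx0 sub0n !inE (negbTE nx0) (negbTE nx1).
move/subset_leq_card => hs; apply: leq_trans hs.
rewrite cardsU1 !inE /singleton dc /= (cardsD1 v0 [set x | singleton M x]) inE s0.
by rewrite andbF.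
Qed.


Lemma set11_notin (T : finType) (adj : rel T) (adj_irr : irreflexive adj)
  (M : {set {set T}}) x : M \subset edges adj -> [set x; x] \notin M.
Proof.
move=> ME; apply/negP => /(subsetP ME) /mem_edgesP [y [z [ayz h]]].
have : y \in [set x; x] by rewrite h in_set2x.
have : z \in [set x; x] by rewrite h in_set2y.
by rewrite !inE !orbb => /eqP ez /eqP ey; rewrite ez ey adj_irr in ayz.
Qed.

Lemma mconnect_closed (T : finType) (r : rel T) (N : {set T}) x w :
  (forall u v, u \in N -> r u v -> v \in N) -> x \in N -> connect r x w -> w \in N.
Proof.
move=> cl xN /connectP [p pp ->]; elim: p x xN pp => [|y p IHp] x xN //= /andP [rxy pp].
exact: (IHp y (cl _ _ xN rxy)).
Qed.

Lemma mcomp_sym (T : finType) (M : {set {set T}}) x y :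
  y \in mcomp M x -> mcomp M y = mcomp M x.
Proof.
have sym : connect_sym (Mrel M).
  by apply: sym_connect_sym => u v; rewrite /Mrel setUC.
rewrite inE => cxy; apply/setP => z; rewrite !inE.
apply/idP/idP => h; first exact: connect_trans cxy h.
by apply: connect_trans h; rewrite sym.
Qed.

Lemma mcomp_self (T : finType) (M : {set {set T}}) x : x \in mcomp M x.
Proof. by rewrite inE connect0. Qed.

Lemma mcomp_nbr (T : finType) (M : {set {set T}}) x y :
  [set x; y] \in M -> y \in mcomp M x.
Proof. by move=> h; rewrite inE; apply: connect1. Qed.


Lemma mid_comp (T : finType) (adj : rel T) (adj_sym : symmetric adj)
  (adj_irr : irreflexive adj) (M : {set {set T}}) m :
  two_matching adj M -> mid M m ->
  mcomp M m \subset [set w | (w == m) || ([set m; w] \in M)].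
Proof.
case/andP => ME _ /andP [_ /forallP hm]; apply/subsetP => w.
move=> cw; have {}cw : connect (Mrel M) m w by rewrite inE in cw.
apply: (mconnect_closed _ _ cw); last by rewrite !inE eqxx.
move=> u v; rewrite !inE /Mrel => /orP [/eqP ->|mu] uv; first by rewrite uv orbT.
have du : mdeg M u = 1 by apply/eqP; move: (hm u); rewrite mu.
have := mdeg1_uniq du mu (in_set2y m u) uv (in_set2x u v).
move=> h; have : v \in [set m; u] by rewrite h in_set2y.
rewrite !inE => /orP [/eqP ->|/eqP evu]; first by rewrite eqxx.
by move: uv; rewrite evu (negbTE (set11_notin adj_irr u ME)).
Qed.

Lemma mid_nedges (T : finType) (adj : rel T) (adj_sym : symmetric adj)
  (adj_irr : irreflexive adj) (M : {set {set T}}) m :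
  two_matching adj M -> mid M m -> comp_nedges M (mcomp M m) = 2.
Proof.
move=> HM md; have sub := mid_comp adj_sym adj_irr HM md.
case/andP: HM => ME _; case/andP: (md) => /eqP dm /forallP hm.
rewrite /comp_nedges -dm /mdeg; apply: eq_card => e; rewrite !inE.
case eM: (e \in M) => //=.
apply/idP/idP => [se|me].
  have [x [y [axy ee]]] := mem_edgesP _ _ (subsetP ME _ eM).
  have := subsetP sub x (subsetP se x _); rewrite ee in_set2x => /(_ isT).
  have := subsetP sub y (subsetP se y _); rewrite ee in_set2y => /(_ isT).
  rewrite !inE => /orP [/eqP ->|my]; first by rewrite eqxx orbT.
  move=> /orP [/eqP ->|mx]; first by rewrite eqxx.
  have dx : mdeg M x = 1 by apply/eqP; move: (hm x); rewrite mx.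
  have xyM : [set x; y] \in M by rewrite -ee.
  have h := mdeg1_uniq dx mx (in_set2y m x) xyM (in_set2x x y); have : y \in [set m; x] by rewrite h in_set2y.
  rewrite !inE => /orP [/eqP ->|/eqP yx]; first by rewrite eqxx orbT.
  by rewrite yx adj_irr in axy.
have [w [_ ee]] := edge_other adj_sym (subsetP ME _ eM) me.
apply/subsetP => z; rewrite ee !inE => /orP [] /eqP ->; first by rewrite connect0.
by apply: connect1; rewrite /Mrel -ee.
Qed.

Definition walk (T : finType) (adj : rel T) (M : {set {set T}}) (i : nat) (v : nat -> T) :=
  [/\ singleton M (v 0),
      forall j, j <= i -> adj (v (2*j)) (v (2*j+1)) /\ [set v (2*j); v (2*j+1)] \notin M,
      forall j, j < i -> mid M (v (2*j+1)) /\ [set v (2*j+1); v (2*j+2)] \in M,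
      mdeg M (v (2*i+1)) = 2 /\ [set v (2*i+1); v (2*i+2)] \in M
    & mdeg M (v (2*i+2)) = 2].

Definition ext (T : Type) (v : nat -> T) i (m z : T) : nat -> T :=
  fun k => if k <= 2*i then v k else if k == 2*i+1 then m else z.

Lemma extL T (v : nat -> T) i m z k : k <= 2*i -> ext v i m z k = v k.
Proof. by rewrite /ext => ->. Qed.
Lemma extM T (v : nat -> T) i m z : ext v i m z (2*i+1) = m.
Proof. by rewrite /ext ifF ?eqxx //; lia. Qed.
Lemma extZ T (v : nat -> T) i m z : ext v i m z (2*i+2) = z.
Proof. by rewrite /ext ifF ?ifF //; lia. Qed.

Lemma reach_prefix (T : finType) (adj : rel T) (M : {set {set T}}) x :
  reach adj M x -> exists i v, [/\ singleton M (v 0),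
      forall j, j < i -> adj (v (2*j)) (v (2*j+1)) /\ [set v (2*j); v (2*j+1)] \notin M,
      forall j, j < i -> mid M (v (2*j+1)) /\ [set v (2*j+1); v (2*j+2)] \in M
    & v (2*i) = x].
Proof.
elim=> {x} [x sx|x m z _ [i [v [s0 h1 h2 vx]]] axm xm mm mz].
  by exists 0, (fun _ => x); split.
exists i.+1, (ext v i m z); split.
- by rewrite extL.
- move=> j ji; case: (ltnP j i) => [lji|lij].
    by rewrite !extL; [exact: h1|lia|lia].
  have -> : j = i by lia.
  by rewrite extM extL // vx.
- move=> j ji; case: (ltnP j i) => [lji|lij].
    by rewrite !extL; [exact: h2|lia|lia].
  have -> : j = i by lia.
  by rewrite extM extZ.
- have -> : 2 * i.+1 = 2*i+2 by lia.
  exact: extZ.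
Qed.

Lemma bad_walk (T : finType) (adj : rel T) (M : {set {set T}}) :
  bad adj M -> exists i v, walk adj M i v.
Proof.
case=> x [y [z [rx [axy [xy [dy [yz dz]]]]]]].
have [i [v [s0 h1 h2 vx]]] := reach_prefix rx.
exists i, (ext v i y z); split.
- by rewrite extL.
- move=> j ji; case: (ltnP j i) => [lji|lij].
    by rewrite !extL; [exact: h1|lia|lia].
  have -> : j = i by lia.
  by rewrite extM extL // vx.
- move=> j ji; rewrite !extL; [exact: h2|lia|lia].
- by rewrite extM extZ.
- by rewrite extZ.
Qed.

Lemma nat_par a : exists p, a = 2*p \/ a = 2*p+1.
Proof.
elim: a => [|a [p [->|->]]]; first by exists 0; left.
  by exists p; right; lia.
by exists p.+1; left; lia.
Qed.

Lemma walk_splice (T : finType) (adj : rel T) (M : {set {set T}}) i v a t :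
  walk adj M i v -> 0 < t -> a + 2*t <= 2*i+1 -> v a = v (a + 2*t) ->
  walk adj M (i - t) (fun n => v (if n <= a then n else n + 2*t)).
Proof.
move=> [s0 h1 h2 [h3 h4] h5] t0 at1 vaa.
set w := fun n => _.
have wl n : n <= a -> w n = v n by rewrite /w => ->.
have wr n : a <= n -> w n = v (n + 2*t).
  rewrite /w leq_eqVlt => /orP [/eqP <-|an]; first by rewrite leqnn.
  by rewrite leqNgt an.
split.
- by rewrite wl.
- move=> j ji; case: (leqP (2*j+1) a) => ja.
    rewrite !wl; try lia.
    by apply: h1; lia.
  rewrite !wr; try lia.
  have -> : 2*j + 2*t = 2*(j+t) by lia.
  have -> : 2*j + 1 + 2*t = 2*(j+t)+1 by lia.
  by apply: h1; lia.
- move=> j ji; case: (leqP (2*j+2) a) => ja.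
    rewrite !wl; try lia.
    by apply: h2; lia.
  rewrite !wr; try lia.
  have -> : 2*j + 1 + 2*t = 2*(j+t)+1 by lia.
  have -> : 2*j + 2 + 2*t = 2*(j+t)+2 by lia.
  by apply: h2; lia.
- rewrite !wr; try lia.
  have -> : 2*(i-t) + 1 + 2*t = 2*i+1 by lia.
  have -> : 2*(i-t) + 2 + 2*t = 2*i+2 by lia.
  by split.
- rewrite wr; last by lia.
  have -> : 2*(i-t) + 2 + 2*t = 2*i+2 by lia.
  by [].
Qed.

Lemma walk_deg_even (T : finType) (adj : rel T) (M : {set {set T}}) i v p :
  walk adj M i v -> p <= i -> mdeg M (v (2*p)) <= 1.
Proof.
case=> s0 h1 h2 _ _; case: p => [|q] qi; first by move: s0; rewrite /singleton => /eqP ->.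
have [/andP [_ /forallP hm] hM] := h2 q qi.
have -> : 2 * q.+1 = 2*q+2 by lia.
by move: (hm (v (2*q+2))); rewrite hM /= => /eqP ->.
Qed.

Lemma walk_deg_odd (T : finType) (adj : rel T) (M : {set {set T}}) i v p :
  walk adj M i v -> p <= i -> mdeg M (v (2*p+1)) = 2.
Proof.
case=> s0 h1 h2 [h3 _] _; rewrite leq_eqVlt => /orP [/eqP ->|pi] //.
by have [/andP [/eqP -> _] _] := h2 p pi.
Qed.

Lemma inj_or_dup (T : finType) (v : nat -> T) N :
  (forall a b, a <= N -> b <= N -> v a = v b -> a = b) \/
  exists a b, [/\ a < b, b <= N & v a = v b].
Proof.
case: (boolP [exists a : 'I_N.+1, exists b : 'I_N.+1, (a < b) && (v a == v b)]).
  case/existsP=> [[a ha]] /existsP [[b hb]] /= /andP [ab /eqP vab].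
  by right; exists a, b.
move=> hn; left => a b ha hb vab; apply/eqP; apply: contraNT hn.
rewrite neq_ltn => /orP [lab|lba].
  apply/existsP; exists (@Ordinal N.+1 a ha); apply/existsP; exists (@Ordinal N.+1 b hb).
  by rewrite /= lab vab eqxx.
apply/existsP; exists (@Ordinal N.+1 b hb); apply/existsP; exists (@Ordinal N.+1 a ha).
by rewrite /= lba vab eqxx.
Qed.

Lemma dup_splice (T : finType) (adj : rel T) (adj_irr : irreflexive adj)
  (M : {set {set T}}) (HM : two_matching adj M) i v a b :
  walk adj M i v -> a < b -> b <= 2*i+2 -> v a = v b ->
  exists t v', [/\ 0 < t, t <= i & walk adj M (i - t) v'].
Proof.
case/andP: (HM) => ME _ W ab bN vab.
have [p [ea|ea]] := nat_par a; have [q [eb|eb]] := nat_par b.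
- case: (leqP q i) => qi.
    exists (q - p), (fun n => v (if n <= a then n else n + 2*(q-p))); split; try lia.
    apply: walk_splice => //; try lia.
    by rewrite vab eb ea; congr v; lia.
  have pi : p <= i by lia.
  have := walk_deg_even W pi; rewrite -ea vab eb.
  have -> : q = i.+1 by lia.
  have -> : 2 * i.+1 = 2*i+2 by lia.
  by case: W => _ _ _ _ ->.
- have pi : p <= i by lia.
  have qi : q <= i by lia.
  by have := walk_deg_even W pi; rewrite -ea vab eb (walk_deg_odd W qi).
- case: (leqP q i) => qi.
    have := walk_deg_even W qi; rewrite -eb -vab ea (walk_deg_odd W) //; lia.
  have eq1 : q = i.+1 by lia.
  case: (ltnP p i) => pi.
    case: W => _ _ h2 [h3 h4] _.
    have [/andP [_ /forallP hm] _] := h2 p pi.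
    move: (hm (v (2*i+1))); rewrite -ea vab eb eq1.
    have -> : 2 * i.+1 = 2*i+2 by lia.
    by rewrite setUC h4 /= h3.
  have ep : p = i by lia.
  case: W => _ _ _ [_ h4] _.
  move: h4; rewrite -(_ : b = 2*i+2); last by lia.
  by rewrite -vab ea ep (negbTE (set11_notin adj_irr _ ME)).
- exists (q - p), (fun n => v (if n <= a then n else n + 2*(q-p))); split; try lia.
  apply: walk_splice => //; try lia.
  by rewrite vab eb ea; congr v; lia.
Qed.

Lemma walk_inj (T : finType) (adj : rel T) (adj_irr : irreflexive adj)
  (M : {set {set T}}) (HM : two_matching adj M) n :
  forall i v, i <= n -> walk adj M i v -> exists i' v', walk adj M i' v' /\
    (forall a b, a <= 2*i'+2 -> b <= 2*i'+2 -> v' a = v' b -> a = b).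
Proof.
elim: n => [|n IH] i v ni W; (case: (inj_or_dup v (2*i+2)) => [inj|[a [b [ab bN vab]]]];
  [by exists i, v|]); have [t [v' [t0 ti W']]] := dup_splice adj_irr HM W ab bN vab.
  lia.
by apply: (IH (i - t) v') => //; lia.
Qed.

Lemma other_edge (T : finType) (adj : rel T) (adj_sym : symmetric adj)
  (M : {set {set T}}) y z :
  M \subset edges adj -> mdeg M y = 2 -> [set y; z] \in M ->
  exists w, [/\ adj y w, w != z & [set y; w] \in M].
Proof.
move=> ME dy yz; have [e1 [e2 [[ne e1M ye1 e2M ye2] _]]] := mdeg2P dy.
have [e [eM ye ne']] : exists e, [/\ e \in M, y \in e & e != [set y; z]].
  case: (e1 =P [set y; z]) => [h|/eqP h]; last by exists e1.
  by exists e2; split => //; rewrite -h eq_sym.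
have [w [ayw ee]] := edge_other adj_sym (subsetP ME _ eM) ye.
exists w; split => //; last by rewrite -ee.
by apply: contraNneq ne' => wz; rewrite ee wz.
Qed.

Lemma three_edges (T : finType) (adj : rel T) (adj_sym : symmetric adj)
  (adj_irr : irreflexive adj) (M : {set {set T}}) y z :
  two_matching adj M -> mdeg M y = 2 -> [set y; z] \in M -> mdeg M z = 2 ->
  3 <= comp_nedges M (mcomp M y).
Proof.
case/andP => ME _ dy yz dz.
have [w [ayw nwz yw]] := other_edge adj_sym ME dy yz.
have zy : [set z; y] \in M by rewrite setUC.
have [c [azc ncy zc]] := other_edge adj_sym ME dz zy.
have nyz : y != z.
  by apply: contraTneq yz => ->; rewrite (negbTE (set11_notin adj_irr _ ME)).
have nzc : z != c by exact: adj_neq.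
have nyw : y != w by exact: adj_neq.
have n1 : [set y; z] != [set y; w].
  by apply: contraNneq nwz => /(set2_eq1 nyz) ->.
have n2 : [set y; z] != [set z; c].
  apply: contraNneq ncy => h; have : y \in [set z; c] by rewrite -h in_set2x.
  by rewrite !inE (negbTE nyz) /= eq_sym.
have n3 : [set y; w] != [set z; c].
  apply/negP => /eqP h; have : y \in [set z; c] by rewrite -h in_set2x.
  rewrite !inE (negbTE nyz) /= => /eqP ey.
  by move: ncy; rewrite ey eqxx.
rewrite -(cards3 n1 n2 n3) /comp_nedges; apply: subset_leq_card; apply/subsetP => e.
have zin : z \in mcomp M y by exact: mcomp_nbr.
have win : w \in mcomp M y by exact: mcomp_nbr.
have cin : c \in mcomp M y.
  by rewrite -(mcomp_sym zin); exact: mcomp_nbr.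
have yin := mcomp_self M y.
have sub2 a b : a \in mcomp M y -> b \in mcomp M y -> [set a; b] \subset mcomp M y.
  by move=> ha hb; apply/subsetP => u; rewrite !in_set2 => /orP [] /eqP ->.
move=> he; have : (e == [set y;z]) || (e == [set y;w]) || (e == [set z;c]) by move: he; rewrite !inE.
by case/orP=> [/orP [] |] /eqP ->; rewrite inE ?yz ?yw ?zc /=; apply: sub2.
Qed.

Lemma bad_saving (T : finType) (adj : rel T) (adj_sym : symmetric adj)
  (adj_irr : irreflexive adj) (M : {set {set T}}) :
  two_matching adj M -> bad adj M ->
  exists v0, singleton M v0 /\ A_alt_path_saving adj M v0.
Proof.
move=> HM /bad_walk [i0 [v0 W0]].
have [i [v [W inj]]] := walk_inj adj_irr HM (leqnn i0) W0.
case: (W) => s0 h1 h2 [h3 h4] h5.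
exists (v 0); split => //; exists i, v; split => //; split => //; split.
- move=> j ji; have [ajj njj] := h1 j ji.
  by rewrite in_setD njj /=; apply/mem_edgesP; exists (v (2*j)), (v (2*j+1)).
- move=> j /andP [j1 ji].
  have ej : 2*j - 1 = 2*(j.-1)+1 by lia.
  have ej' : 2*j = 2*(j.-1)+2 by lia.
  have [md hM] := h2 j.-1 ltac:(lia).
  rewrite ej ej'.
  case/andP: (md) => /eqP dm /forallP hm.
  have de : mdeg M (v (2 * j.-1 + 2)) = 1 by apply/eqP; move: (hm (v (2*j.-1+2))); rewrite hM.
rewrite /=.   rewrite (mid_nedges adj_sym adj_irr HM md) dm mcomp_nbr // /is_endpoint de /= andbT.
  rewrite /is_path_comp /is_cycle_comp; apply/negP => /forallP /(_ (v (2*j.-1+2))).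
  by rewrite mcomp_nbr //= de.
- move=> j k /andP [j1 ji] /andP [k1 ki] ejk.
  have ej : 2*j - 1 = 2*(j.-1)+1 by lia.
  have ek : 2*k - 1 = 2*(k.-1)+1 by lia.
  have [mdj _] := h2 j.-1 ltac:(lia).
  have [mdk _] := h2 k.-1 ltac:(lia).
  move: ejk; rewrite ej ek => ejk.
  have := subsetP (mid_comp adj_sym adj_irr HM mdk) (v (2*j.-1+1)).
  rewrite -ejk mcomp_self => /(_ isT); rewrite inE => /orP [/eqP e|nb].
    by have := inj (2*j.-1+1) (2*k.-1+1) ltac:(lia) ltac:(lia) e; lia.
  case/andP: mdk => _ /forallP /(_ (v (2*j.-1+1))); rewrite nb /=.
  by case/andP: mdj => /eqP ->.
- rewrite h4; split => //; last by rewrite /is_endpoint h5.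
  by rewrite (three_edges adj_sym adj_irr HM h3 h4 h5) orbT.
Qed.

Definition el (T : finType) (p : seq T) : seq {set T} :=
  [seq [set ab.1; ab.2] | ab <- zip p (behead p)].

Lemma el_cons2 (T : finType) (x y : T) r : el (x :: y :: r) = [set x; y] :: el (y :: r).
Proof. by []. Qed.
Lemma el_1 (T : finType) (x : T) : el [:: x] = [::].
Proof. by []. Qed.

Lemma pcE (T : finType) (ps : seq (seq T)) e :
  (e \in pc_edges ps) = has (fun p => e \in el p) ps.
Proof.
rewrite inE; apply/flattenP/hasP.
  by case=> s /mapP [p pps ->] es; exists p.
by case=> p pps ep; exists (el p) => //; apply: map_f.
Qed.

Lemma el_mem (T : finType) (p : seq T) e x : e \in el p -> x \in e -> x \in p.
Proof.
elim: p => [|a [|b r] IH] //; rewrite el_cons2 inE => /orP [/eqP ->|er] xe.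
  by move: xe; rewrite !inE => /orP [] ->; rewrite ?orbT.
by rewrite inE (IH er xe) orbT.
Qed.

Lemma el_adj (T : finType) (adj : rel T) (p : seq T) x e :
  path adj x p -> e \in el (x :: p) -> e \in edges adj.
Proof.
elim: p x => [|b r IH] x //= /andP [axb pr]; rewrite el_cons2 inE => /orP [/eqP ->|er].
  by apply/mem_edgesP; exists x, b.
exact: IH pr er.
Qed.

Lemma el_has (T : finType) (p : seq T) x : 1 < size p -> x \in p ->
  exists2 e, e \in el p & x \in e.
Proof.
elim: p => [|a [|b r] IH] //= _; rewrite el_cons2 inE => /orP [/eqP ->|].
  by exists [set a; b]; rewrite ?inE ?eqxx.
rewrite inE => /orP [/eqP ->|xr].
  by exists [set a; b]; rewrite ?inE ?eqxx ?orbT.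
have sz : 1 < size (b :: r) by case: r {IH} xr.
have xbr : x \in b :: r by rewrite inE xr orbT.
have [e ee xe] := IH sz xbr.
by exists e => //; rewrite inE ee orbT.
Qed.

Definition degp (T : finType) (p : seq T) x := #|[set e | (e \in el p) && (x \in e)]|.

Lemma degp_le (T : finType) (p : seq T) x : uniq p ->
  degp p x <= (if p is y :: _ then (if x == y then 1 else 2) else 0).
Proof.
rewrite /degp; elim: p => [|a [|b r] IH] /=.
- move=> _; have -> : [set e | (e \in el [::]) && (x \in e)] = set0.
    by apply/setP => e; rewrite !inE.
  by rewrite cards0.
- move=> _; have -> : [set e | (e \in el [:: a]) && (x \in e)] = set0.
    by apply/setP => e; rewrite !inE.
  by rewrite cards0; case: (x == a).
move=> /andP [nar /andP [nbr ur]].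
have IH' := IH (_ : uniq (b :: r)); rewrite /= nbr ur /= in IH'; move: IH' => /(_ isT) IH'.
have sub : [set e | (e \in el [:: a, b & r]) && (x \in e)] \subset
  (if x \in [set a; b] then [set a; b] |: [set e | (e \in el (b :: r)) && (x \in e)]
   else [set e | (e \in el (b :: r)) && (x \in e)]).
  apply/subsetP => e; rewrite inE el_cons2 inE => /andP [/orP [/eqP ->|er] xe].
    by rewrite xe !inE eqxx.
  by case: (x \in [set a; b]); rewrite !inE er xe ?orbT.
have := subset_leq_card sub.
case: (x =P a) => [xa|/eqP nxa].
  have -> : [set e | (e \in el (b :: r)) && (x \in e)] = set0.
    apply/setP => e; rewrite !inE; apply/negP => /andP [er xe].
    by move: (el_mem er xe); rewrite -xa in nar; rewrite (negbTE nar).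
  by rewrite xa in_set2x setU0 cards1.
case: (x =P b) => [xb|/eqP nxb].
  rewrite xb in_set2y => h; apply: leq_trans h _; rewrite cardsU1.
  by move: IH'; rewrite xb eqxx; case: (_ \notin _) => /=; lia.
rewrite !inE (negbTE nxa) (negbTE nxb) /= => h; apply: leq_trans h _.
by move: IH'; rewrite (negbTE nxb).
Qed.

Lemma flat_uniq_in (T : finType) (ps : seq (seq T)) p :
  uniq (flatten ps) -> p \in ps -> uniq p.
Proof.
elim: ps => [|h t IH] //=; rewrite cat_uniq inE => /and3P [uh _ ut] /orP [/eqP ->|pt] //.
exact: IH.
Qed.

Lemma flat_same (T : finType) (ps : seq (seq T)) p r x :
  uniq (flatten ps) -> p \in ps -> r \in ps -> x \in p -> x \in r -> p = r.
Proof.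
elim: ps => [|h t IH] //=; rewrite cat_uniq !inE => /and3P [uh nh ut].
have H y s : s \in t -> y \in s -> y \in h -> False.
  move=> st ys yh; move/hasP: nh; apply; exists y => //.
  by apply/flattenP; exists s.
move=> /orP [/eqP ->|pt] /orP [/eqP ->|rt] xp xr //.
- by case: (H x r rt xr xp).
- by case: (H x p pt xp xr).
- exact: IH.
Qed.

Lemma cover_F (T : finType) (adj : rel T) (ps : seq (seq T)) :
  path_cover adj ps -> two_matching adj (pc_edges ps) /\
  #|[set x | singleton (pc_edges ps) x]| <= n_zero_paths ps.
Proof.
case/and3P => /allP gp up /forallP cov.
have pin x : exists2 p, p \in ps & x \in p by apply/flattenP.
have Fin e : e \in pc_edges ps -> exists2 p, p \in ps & e \in el p.
  by rewrite pcE => /hasP [p pps ep]; exists p.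
have degF x p : p \in ps -> x \in p -> mdeg (pc_edges ps) x <= degp p x.
  move=> pps xp; apply: subset_leq_card; apply/subsetP => e /setIdP [eF xe].
  rewrite inE xe andbT.
  have [r rps er] := Fin e eF.
  by rewrite (flat_same up pps rps xp (el_mem er xe)).
split.
  apply/andP; split.
    apply/subsetP => e /Fin [p pps ep]; move: (gp p pps) ep; case: (p) => [|y q] //.
    by case/andP => pq _ ep; exact: el_adj pq ep.
  apply/forallP => x; have [p pps xp] := pin x.
  apply: leq_trans (degF x p pps xp) _; apply: leq_trans (degp_le x (flat_uniq_in up pps)) _.
  by case: (p) => [|y q] //; case: (x == y).
have sub : [set x | singleton (pc_edges ps) x] \subset [set x | [:: x] \in ps].
  apply/subsetP => x; rewrite !inE /singleton => /eqP d0.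
  have [p pps xp] := pin x.
  case: p pps xp => [|y [|z q]] //.
    by rewrite inE => pps /eqP ->.
  move=> pps xp; have [e ep xe] := el_has (isT : 1 < size [:: y, z & q]) xp.
  have : 0 < mdeg (pc_edges ps) x.
    by apply/mdeg_gt0; exists e => //; rewrite pcE; apply/hasP; exists [:: y, z & q].
  by rewrite d0.
apply: leq_trans (subset_leq_card sub) _.
rewrite /n_zero_paths cardE -(size_map (fun x => [:: x])) -size_filter.
apply: uniq_leq_size.
  by rewrite map_inj_uniq ?enum_uniq // => a b [].
move=> s /mapP [x]; rewrite mem_enum inE => xps ->.
by rewrite mem_filter xps.
Qed.

Lemma el_cat (T : finType) (a b : T) s0 t0 :
  el (a :: s0 ++ b :: t0) = el (a :: s0) ++ [set last a s0; b] :: el (b :: t0).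
Proof. by elim: s0 a => [|c s1 IH] a //=; rewrite !el_cons2 /= -IH. Qed.

Lemma el_rev (T : finType) (p : seq T) e : (e \in el (rev p)) = (e \in el p).
Proof.
elim: p => [|a [|b r0] IH] //.
rewrite rev_cons -cats1 el_cons2 inE -IH.
case E: (rev (b :: r0)) => [|c s0]; first by move: (congr1 size E); rewrite size_rev.
rewrite el_cat el_1 mem_cat inE.
have -> : last c s0 = b.
  by have := congr1 (last c) E; rewrite rev_cons last_rcons /= => <-.
by rewrite setUC orbC.
Qed.

Lemma gpath_rev (T : finType) (adj : rel T) (adj_sym : symmetric adj) p :
  gpath adj p -> gpath adj (rev p).
Proof.
case: p => [|a r] //= /andP [pr ur].
have : uniq (rev (a :: r)) by rewrite rev_uniq.
rewrite lastI rev_rcons /= => /andP [h1 h2]; rewrite h1 h2 andbT rev_path.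
rewrite (@eq_path _ _ adj) ?pr // => u w /=; by rewrite adj_sym.
Qed.

Lemma uniq_ps (T : finType) (ps : seq (seq T)) :
  (forall p, p \in ps -> p != [::]) -> uniq (flatten ps) -> uniq ps.
Proof.
elim: ps => [|h t IH] //= ne; rewrite cat_uniq => /and3P [_ nh ut].
have -> : uniq t by apply: IH => // p pt; apply: ne; rewrite inE pt orbT.
rewrite andbT; apply/negP => ht.
case: h ne nh ht => [|y h] ne; first by move: (ne [::]); rewrite inE eqxx => /(_ isT).
move=> /hasP nh ht; apply: nh; exists y; last by rewrite inE eqxx.
by apply/flattenP; exists (y :: h) => //; rewrite inE eqxx.
Qed.

Lemma degp_sub (T : finType) (p q : seq T) z :
  {subset el p <= el q} -> degp p z <= degp q z.
Proof.
move=> s; apply: subset_leq_card; apply/subsetP => e; rewrite !inE => /andP [ep ->].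
by rewrite s.
Qed.

Lemma interior (T : finType) (p : seq T) z :
  uniq p -> z \in p -> z != head z p -> z != last z p -> 1 < degp p z.
Proof.
elim: p => [|a [|b r] IH] //=.
  by rewrite inE => _ /eqP ->; rewrite eqxx.
move=> /andP [nar ubr]; rewrite inE => /orP [/eqP ->|zbr]; first by rewrite eqxx.
move=> _ zl; case: (z =P b) => [zb|/eqP nzb].
  case: r zl ubr nar {IH zbr} => [|c r1]; first by rewrite /= zb eqxx.
  move=> _ _; rewrite !inE negb_or => /andP [nab /norP [nac _]].
  have sub : [set [set a; b]; [set b; c]] \subset [set e | (e \in el [:: a, b, c & r1]) && (z \in e)].
    apply/subsetP => e; rewrite in_set2 => /orP [] /eqP ->; rewrite inE el_cons2 el_cons2 !in_cons eqxx ?orbT /= !inE zb eqxx ?orbT //.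
  apply: leq_trans (subset_leq_card sub); rewrite cards2.
  case: eqP => // h; have : a \in [set b; c] by rewrite -h in_set2x.
  by rewrite !inE (negbTE nab) (negbTE nac).
apply: leq_trans (IH ubr zbr nzb zl) _.
by apply: degp_sub => e er; rewrite el_cons2 inE er orbT.
Qed.

Lemma card2I (T : finType) (A : {set T}) x y :
  x != y -> #|A :&: [set x; y]| = (x \in A) + (y \in A).
Proof.
move=> nxy; have nyx : y != x by rewrite eq_sym.
have K (B : {set T}) : (forall z, (z \in A) && ((z == x) || (z == y)) = (z \in B)) -> A :&: [set x; y] = B.
  by move=> h; apply/setP => z; rewrite !inE h.
case xA: (x \in A); case yA: (y \in A).
- by rewrite (setIidPr _) ?cards2 ?nxy //; apply/subsetP => z; rewrite !inE => /orP [] /eqP ->.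
- have -> : A :&: [set x; y] = [set x].
    apply: K => z; rewrite !inE; case: (eqVneq z x) => [->|nzx]; rewrite ?xA ?(negbTE nxy) ?eqxx //=;
      case: (eqVneq z y) => [->|nzy]; rewrite ?yA ?(negbTE nyx) ?(negbTE nzx) ?(negbTE nzy) ?eqxx ?andbF //.
  by rewrite cards1.
- have -> : A :&: [set x; y] = [set y].
    apply: K => z; rewrite !inE; case: (eqVneq z x) => [->|nzx]; rewrite ?xA ?(negbTE nxy) ?eqxx //=;
      case: (eqVneq z y) => [->|nzy]; rewrite ?yA ?(negbTE nyx) ?(negbTE nzx) ?(negbTE nzy) ?eqxx ?andbF //.
  by rewrite cards1.
- have -> : A :&: [set x; y] = set0.
    apply: K => z; rewrite !inE; case: (eqVneq z x) => [->|nzx]; rewrite ?xA ?(negbTE nxy) ?eqxx //=;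
      case: (eqVneq z y) => [->|nzy]; rewrite ?yA ?(negbTE nyx) ?(negbTE nzx) ?(negbTE nzy) ?eqxx ?andbF //.
  by rewrite cards0.
Qed.

Lemma zero_iff (T : finType) (adj : rel T) (ps : seq (seq T)) p z :
  path_cover adj ps -> p \in ps -> z \in p ->
  (mdeg (pc_edges ps) z == 0) = (size p == 1).
Proof.
case/and3P => _ up _ pps zp.
case: p pps zp => [|y [|w q]] // pps zp.
  move: (zp); rewrite inE => /eqP zy; rewrite eqxx; apply/eqP.
  apply/eqP; rewrite cards_eq0; apply/eqP/setP => e; rewrite [in RHS]inE.
  apply/negP => /setIdP [eF ze]; move: eF; rewrite pcE => /hasP [r rps er].
  have := flat_same up pps rps zp (el_mem er ze); move=> h; move: er; rewrite -h.
  by rewrite el_1.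
have [e ep ze] := el_has (isT : 1 < size [:: y, w & q]) zp.
apply/negbTE; rewrite -lt0n; apply/mdeg_gt0; exists e => //.
by rewrite pcE; apply/hasP; exists [:: y, w & q].
Qed.

Definition noCyc (T : finType) (L : {set {set T}}) : Prop :=
  forall U : {set T}, U != set0 -> (forall v, v \in U -> mdeg L v = 2) ->
  (forall v e, v \in U -> e \in L -> v \in e -> e \subset U) -> False.

Lemma head_rev (T : Type) (x : T) s : head x (rev s) = last x s.
Proof. by case/lastP: s => [|s z] //; rewrite rev_rcons last_rcons. Qed.
Lemma last_rev (T : Type) (x : T) s : last x (rev s) = head x s.
Proof. by case: s => [|z s] //; rewrite rev_cons last_rcons. Qed.

Lemma build_base (T : finType) (adj : rel T) :
  exists ps, [/\ path_cover adj ps, pc_edges ps = set0 &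
    n_zero_paths ps = #|[set x | mdeg (set0 : {set {set T}}) x == 0]|].
Proof.
have fl (s : seq T) : flatten [seq [:: x] | x <- s] = s by elim: s => //= x s ->.
exists [seq [:: x] | x <- enum T]; split.
- apply/and3P; split; first by apply/allP => p /mapP [x _ ->].
    by rewrite fl enum_uniq.
  by apply/forallP => x; rewrite fl mem_enum.
- apply/setP => e; rewrite pcE inE; apply/negP => /hasP [p /mapP [x _ ->]].
  by rewrite el_1.
- rewrite /n_zero_paths count_map.
  have -> : [set x | mdeg (set0 : {set {set T}}) x == 0] = setT.
    apply/setP => x; rewrite !inE /mdeg; apply/eqP; apply: eq_card0 => e.
    by rewrite !inE.
  by rewrite cardsT cardE -size_filter; congr size; apply/all_filterP; apply/allP.
Qed.

Lemma noCyc_D1 (T : finType) (L : {set {set T}}) e :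
  (forall x, mdeg L x <= 2) -> noCyc L -> e \in L -> noCyc (L :\ e).
Proof.
move=> Ldeg nc eL U U0 dU eU; apply: (nc U U0).
- move=> v vU; have := Ldeg v; rewrite -(setD1K eL) mdegU1 !inE eqxx /= dU //.
  by case: (v \in e) => //=; lia.
- move=> v f vU fL vf; case: (f =P e) => [fe|/eqP nfe].
    have := Ldeg v; rewrite -(setD1K eL) mdegU1 !inE eqxx /= dU // -fe vf /=; lia.
  by apply: (eU v f vU) => //; rewrite !inE nfe fL.
Qed.

Lemma arith1 a b : 1 < a -> a <= b -> b + true <= 2 -> False.
Proof. lia. Qed.
Lemma arith2 a b c : 0 < a -> a <= b -> c = b + true -> c <= 2 -> 1 < c.
Proof. lia. Qed.
Lemma arith3 a b c : 1 < a -> a <= b -> c = b + false -> c <= 2 -> 1 < c.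
Proof. lia. Qed.

Lemma build (T : finType) (adj : rel T) (adj_sym : symmetric adj)
  (adj_irr : irreflexive adj) n :
  forall L : {set {set T}}, #|L| = n -> L \subset edges adj ->
  (forall x, mdeg L x <= 2) -> noCyc L ->
  exists ps, [/\ path_cover adj ps, pc_edges ps = L &
                 n_zero_paths ps = #|[set x | mdeg L x == 0]|].
Proof.
elim: n => [|n IH] L cL LE Ldeg nc.
  by move/cards0_eq: cL => ->; exact: build_base.
have [e eL] : exists e, e \in L by apply/set0Pn; rewrite -card_gt0 cL.
set L' := L :\ e.
have cL' : #|L'| = n by move: cL; rewrite (cardsD1 e L) eL add1n => [[]].
have LE' : L' \subset edges adj by apply: subset_trans LE; exact: subsetDl.
have Ldeg' x : mdeg L' x <= 2 by apply: leq_trans (Ldeg x); apply: mdeg_sub; exact: subsetDl.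
have [ps' [cov' pc' nz']] := IH L' cL' LE' Ldeg' (noCyc_D1 Ldeg nc eL).
have [x [y [axy ee]]] := mem_edgesP _ _ (subsetP LE e eL).
have nxy : x != y by exact: adj_neq.
have eL' : e \notin L' by rewrite !inE eqxx.
have LU : L = e |: L' by rewrite setD1K.
have degL z : mdeg L z = mdeg L' z + (z \in e).
  by rewrite {1}LU mdegU1 eL' andbT.
have cov'' := cov'; case/and3P: cov'' => /allP gp up /forallP cover.
have [p pps xp] := flattenP (cover x).
have [q qps yq] := flattenP (cover y).
have degp_le' z r : r \in ps' -> degp r z <= mdeg L' z.
  move=> rps; apply: subset_leq_card; apply/subsetP => f; rewrite inE => /andP [fr zf].
  by rewrite inE zf andbT -pc' pcE; apply/hasP; exists r.
have up' r : r \in ps' -> uniq r by move=> rps; exact: flat_uniq_in up rps.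
have ne' r : r \in ps' -> r != [::] by move=> rps; move: (gp r rps); case: r {rps}.
have endp z r : r \in ps' -> z \in r -> z \in e -> z = head z r \/ z = last z r.
  move=> rps zr ze; case: (eqVneq z (head z r)) => [|nh]; first by left.
  case: (eqVneq z (last z r)) => [|nl]; first by right.
  have := Ldeg z; rewrite degL ze => h3.
  by case: (arith1 (interior (up' r rps) zr nh nl) (degp_le' z r rps) h3).
have xe : x \in e by rewrite ee in_set2x.
have ye : y \in e by rewrite ee in_set2y.
have npq : p != q.
  apply/eqP => epq; rewrite -epq in yq.
  apply: (nc [set z | z \in p]).
  - by apply/set0Pn; exists x; rewrite inE.
  - move=> z; rewrite inE => zp; apply/eqP; rewrite eqn_leq Ldeg /=.
    case: p pps xp yq zp {epq} => [|a r] // pps xp yq zp.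
    have sz : 1 < size (a :: r).
      case: r {pps} xp yq zp => [|b r] //; rewrite !inE => /eqP ex /eqP ey.
      by rewrite ex ey eqxx in nxy.
    case: (boolP (z \in e)) => ze.
      have [f fp zf] := el_has sz zp.
      have : 0 < degp (a :: r) z.
        by rewrite card_gt0; apply/set0Pn; exists f; rewrite inE fp zf.
      move=> h; apply: (arith2 h (degp_le' z _ pps)) (Ldeg z).
      by rewrite degL ze.
    have nh : z != head z (a :: r).
      apply: contraNneq ze => /= za.
      have [hx|hx] := endp x _ pps xp xe; have [hy|hy] := endp y _ pps yq ye;
        move: hx hy; rewrite /= => hx hy.
      - by move: nxy; rewrite hx hy eqxx.
      - by rewrite za -hx.
      - by rewrite za -hy.
      - by move: nxy; rewrite hx hy eqxx.
    have nl : z != last z (a :: r).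
      apply: contraNneq ze => /= za.
      have [hx|hx] := endp x _ pps xp xe; have [hy|hy] := endp y _ pps yq ye;
        move: hx hy; rewrite /= => hx hy.
      - by move: nxy; rewrite hx hy eqxx.
      - by rewrite za -hy.
      - by rewrite za -hx.
      - by move: nxy; rewrite hx hy eqxx.
    apply: (arith3 (interior (up' _ pps) zp nh nl) (degp_le' z _ pps)) (Ldeg z).
    by rewrite degL (negbTE ze).
  - move=> z f; rewrite inE => zp fL zf; apply/subsetP => w wf; rewrite inE.
    move: fL; rewrite LU in_setU1 => /orP [/eqP fe|fL'].
      by move: wf; rewrite fe ee !inE => /orP [] /eqP ->.
    move: fL'; rewrite -pc' pcE => /hasP [r rps fr].
    by rewrite (flat_same up pps rps zp (el_mem fr zf)); exact: el_mem fr wf.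
set p' := if x == last x p then p else rev p.
set q' := if y == head y q then q else rev q.
have pp' : perm_eq p' p by rewrite /p'; case: ifP => _; rewrite ?perm_rev.
have qq' : perm_eq q' q by rewrite /q'; case: ifP => _; rewrite ?perm_rev.
have gp' : gpath adj p' by rewrite /p'; case: ifP => _; [exact: gp|apply: gpath_rev => //; exact: gp].
have gq' : gpath adj q' by rewrite /q'; case: ifP => _; [exact: gp|apply: gpath_rev => //; exact: gp].
have lp' : last x p' = x.
  rewrite /p'; case: ifP => [/eqP //|/negbT nl].
  rewrite last_rev; have [h|h] := endp x p pps xp xe; first by rewrite -h.
  by rewrite -h eqxx in nl.
have hq' : head y q' = y.
  rewrite /q'; case: ifP => [/eqP //|/negbT nh].
  rewrite head_rev; have [h|h] := endp y q qps yq ye; last by rewrite -h.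
  by rewrite -h eqxx in nh.
have [a [s0 [ep' la]]] : exists a s0, p' = a :: s0 /\ last a s0 = x.
  case E: p' pp' lp' => [|a s0]; first by move/perm_size; move: (ne' p pps); case: (p).
  by move=> _ /= h; exists a, s0.
have [t0 eq'] : exists t0, q' = y :: t0.
  case E: q' qq' hq' => [|b t0]; first by move/perm_size; move: (ne' q qps); case: (q).
  by move=> _ /= ->; exists t0.
set rest := rem q (rem p ps').
have ups : uniq ps' by apply: uniq_ps => // r /ne'.
have qin : q \in rem p ps' by rewrite (mem_rem_uniq _ ups) inE eq_sym npq qps.
have perm1 : perm_eq ps' [:: p, q & rest].
  apply: perm_trans (perm_to_rem pps) _; rewrite perm_cons.
  exact: perm_to_rem qin.
have restin r : r \in rest -> r \in ps'.
  by move=> /mem_rem /mem_rem.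
have pflat : perm_eq (flatten ((p' ++ q') :: rest)) (flatten ps').
  rewrite perm_sym; apply: perm_trans (perm_flatten perm1) _ => /=.
  by rewrite catA perm_cat2r perm_sym perm_cat.
exists ((p' ++ q') :: rest); split.
- apply/and3P; split.
  + apply/allP => r; rewrite inE => /orP [/eqP ->|/restin]; last exact: gp.
    rewrite ep' eq' /= cat_path /= la axy.
    move: gp' gq'; rewrite ep' eq' /= => /andP [-> _] /andP [-> _] /=.
    have : uniq (flatten ((p' ++ q') :: rest)) by rewrite (perm_uniq pflat).
    by rewrite /= ep' eq' cat_uniq => /andP [].
  + by rewrite (perm_uniq pflat).
  + by apply/forallP => z; rewrite (perm_mem pflat).
- apply/setP => f; rewrite LU in_setU1 -pc' !pcE (perm_has _ perm1) /= ep' eq'.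
  rewrite el_cat la -ep' -eq' mem_cat inE -ee.
  have -> : (f \in el p') = (f \in el p) by rewrite /p'; case: ifP => _; rewrite ?el_rev.
  have -> : (f \in el q') = (f \in el q) by rewrite /q'; case: ifP => _; rewrite ?el_rev.
  by case: (f \in el p); case: (f == e); case: (f \in el q).
- rewrite /n_zero_paths /= ep' eq' size_cat /= addnS /= add0n.
  move: nz'; rewrite /n_zero_paths (permP perm1) /=.
  set S' := [set z | mdeg L' z == 0].
  rewrite -(cardsID [set x; y] S') (card2I _ nxy) !inE.
  rewrite -pc' (zero_iff cov' pps xp) (zero_iff cov' qps yq).
  have -> : S' :\: [set x; y] = [set z | mdeg L z == 0].
    apply/setP => z; rewrite !inE degL ee !inE.
    by case: (z == x); case: (z == y); rewrite /= ?addn1 ?addn0 ?andbF ?andbT.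
  move=> h; apply/eqP; rewrite -(eqn_add2l ((size p == 1) + (size q == 1))).
  by rewrite -addnA h.
Qed.

Lemma mdeg_split (T : finType) (M D : {set {set T}}) z :
  mdeg M z <= mdeg (M :\: D) z + #|[set f in D | z \in f]|.
Proof.
apply: leq_trans (leq_card_setU _ _).1; apply: subset_leq_card; apply/subsetP => f.
rewrite !inE; case/andP => fM zf; rewrite fM zf !andbT; by case: (f \in D).
Qed.

Lemma noCyc_MD (T : finType) (adj : rel T) (adj_sym : symmetric adj)
  (M D : {set {set T}}) :
  two_matching adj M -> D \subset M ->
  (forall x, is_cycle_comp M (mcomp M x) -> #|[set e in D | e \subset mcomp M x]| = 1) ->
  noCyc (M :\: D).
Proof.
case/andP => ME /forallP Mdeg sDM hD1 U U0 dU eU.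
have allL v f : v \in U -> f \in M -> v \in f -> f \in M :\: D.
  move=> vU fM vf; have sub : [set e in M :\: D | v \in e] \subset [set e in M | v \in e].
    by apply/subsetP => g; rewrite !inE => /andP [/andP [_ ->] ->].
  have : [set e in M :\: D | v \in e] = [set e in M | v \in e].
    apply/eqP; rewrite eqEcard sub /=; have := dU v vU; rewrite /mdeg => ->.
    exact: Mdeg.
  by move/setP/(_ f); rewrite !inE fM vf !andbT => ->.
have [v vU] := set0Pn _ U0.
have cl : mcomp M v \subset U.
  apply/subsetP => w cw; have {}cw : connect (Mrel M) v w by rewrite inE in cw.
  apply: (mconnect_closed _ vU cw) => u w' uU uw'.
  have h := allL u _ uU uw' (in_set2x u w').
  by apply: (subsetP (eU u _ uU h (in_set2x u w'))); rewrite in_set2y.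
have d2 y : y \in U -> mdeg M y = 2.
  move=> yU; apply/eqP; rewrite eqn_leq Mdeg -(dU y yU) /=; apply: mdeg_sub; exact: subsetDl.
have cyc : is_cycle_comp M (mcomp M v).
  by apply/forallP => y; apply/implyP => yc; rewrite d2 // (subsetP cl).
have := hD1 v cyc; move/eqP/cards1P => [f hf].
have : f \in [set e in D | e \subset mcomp M v] by rewrite hf inE.
rewrite inE => /andP [fD fc].
have fM := subsetP sDM f fD.
have [a [b [_ ef]]] := mem_edgesP _ _ (subsetP ME f fM).
have aU : a \in U by apply: (subsetP cl); apply: (subsetP fc); rewrite ef in_set2x.
have := allL a f aU fM; rewrite ef in_set2x => /(_ isT).
by rewrite -ef inE fD.
Qed.

Lemma zeros_MD (T : finType) (adj : rel T) (adj_sym : symmetric adj)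
  (M D : {set {set T}}) :
  two_matching adj M -> D \subset M ->
  (forall x, is_cycle_comp M (mcomp M x) -> #|[set e in D | e \subset mcomp M x]| = 1) ->
  (forall e, e \in D -> exists x, is_cycle_comp M (mcomp M x) && (e \subset mcomp M x)) ->
  [set x | mdeg (M :\: D) x == 0] = [set x | mdeg M x == 0].
Proof.
case/andP => ME /forallP Mdeg sDM hD1 hD2; apply/setP => z; rewrite !inE.
apply/idP/idP => h; last first.
  by rewrite -leqn0 -(eqP h) mdeg_sub // subsetDl.
have hs := mdeg_split M D z; rewrite (eqP h) add0n in hs.
rewrite -leqn0; apply: leq_trans (hs) _.
have Dz : [set f in D | z \in f] \subset [set e in D | e \subset mcomp M z].
  apply/subsetP => f; rewrite !inE => /andP [fD zf]; rewrite fD /=.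
  have [w [_ ef]] := edge_other adj_sym (subsetP ME _ (subsetP sDM f fD)) zf.
  apply/subsetP => u; rewrite ef !inE => /orP [] /eqP ->; first by rewrite connect0.
  by apply: connect1; rewrite /Mrel -ef (subsetP sDM).
case: (boolP (is_cycle_comp M (mcomp M z))) => cyc.
  have := subset_leq_card Dz; rewrite hD1 // => hle.
  have dz : mdeg M z = 2.
    by apply/eqP; move/forallP: cyc => /(_ z); rewrite mcomp_self.
  by move: (leq_trans hs hle); rewrite dz.
rewrite leqn0 cards_eq0; apply/eqP/setP => f; rewrite inE [RHS]inE.
apply/negP => /andP [fD zf]; have [x /andP [cx fx]] := hD2 f fD.
have zx : z \in mcomp M x by apply: (subsetP fx).
by move: cyc; rewrite (mcomp_sym zx) cx.
Qed.

Lemma part3 (T : finType) (adj : rel T) (adj_sym : symmetric adj)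
  (adj_irr : irreflexive adj) (M D : {set {set T}}) :
  two_matching adj M -> D \subset M ->
  (forall x, is_cycle_comp M (mcomp M x) -> #|[set e in D | e \subset mcomp M x]| = 1) ->
  (forall e, e \in D -> exists x, is_cycle_comp M (mcomp M x) && (e \subset mcomp M x)) ->
  exists ps, [/\ path_cover adj ps, pc_edges ps = M :\: D
               & n_zero_paths ps = #|[set x | singleton M x]|].
Proof.
move=> HM sDM hD1 hD2; have HM' := HM; case/andP: HM' => ME /forallP Mdeg.
have [ps [c1 c2 c3]] := build adj_sym adj_irr (erefl #|M :\: D|)
  (subset_trans (subsetDl M D) ME)
  (fun x => leq_trans (mdeg_sub x (subsetDl M D)) (Mdeg x))
  (noCyc_MD adj_sym HM sDM hD1).
exists ps; split => //; rewrite c3 (zeros_MD adj_sym HM sDM hD1 hD2).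
by [].
Qed.

Definition pk (T : finType) (M : {set {set T}}) (C : {set T}) : option {set T} :=
  [pick f | (f \in M) && (f \subset C)].

Lemma pkP (T : finType) (M : {set {set T}}) C f : pk M C = Some f -> (f \in M) && (f \subset C).
Proof. by rewrite /pk; case: pickP => [f' H [<-]|]. Qed.

Lemma part2D (T : finType) (adj : rel T) (adj_sym : symmetric adj)
  (adj_irr : irreflexive adj) (M : {set {set T}}) :
  two_matching adj M -> exists D : {set {set T}}, [/\ D \subset M,
  (forall x, is_cycle_comp M (mcomp M x) -> #|[set e in D | e \subset mcomp M x]| = 1) &
  (forall e, e \in D -> exists x, is_cycle_comp M (mcomp M x) && (e \subset mcomp M x))].
Proof.
move=> HM; case/andP: (HM) => ME _.
set D := [set f in M | [exists x, is_cycle_comp M (mcomp M x) && (pk M (mcomp M x) == Some f)]].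
exists D; split.
- by apply/subsetP => f; rewrite inE => /andP [].
- move=> x cx.
  have [f0 pf0] : exists f0, pk M (mcomp M x) = Some f0.
    case E: (pk M (mcomp M x)) => [f0|]; first by exists f0.
    move: E; rewrite /pk; case: pickP => // H _.
    have dx : mdeg M x = 2 by apply/eqP; move/forallP: cx => /(_ x); rewrite mcomp_self.
    have [e1 [_ [[_ e1M xe1 _ _] _]]] := mdeg2P dx.
    have [w [_ ee]] := edge_other adj_sym (subsetP ME _ e1M) xe1.
    move: (H e1); rewrite e1M /= => /negP; case; rewrite ee.
    apply/subsetP => u; rewrite !inE => /orP [] /eqP ->; first by rewrite connect0.
    by apply: connect1; rewrite /Mrel -ee.
  have := pkP pf0; case/andP => f0M f0c.
  have -> : [set e in D | e \subset mcomp M x] = [set f0].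
    apply/setP => f; rewrite !inE; apply/idP/idP.
      case/andP => /andP [fM /existsP [x' /andP [cx' /eqP pf]]] fc.
      have /andP [_ fc'] := pkP pf.
      have [a [b [_ ef]]] := mem_edgesP _ _ (subsetP ME f fM).
      have ax : a \in mcomp M x by apply: (subsetP fc); rewrite ef in_set2x.
      have ax' : a \in mcomp M x' by apply: (subsetP fc'); rewrite ef in_set2x.
      move: pf; rewrite -(mcomp_sym ax') (mcomp_sym ax) pf0 => [[->]].
      by [].
    move/eqP ->; rewrite f0M f0c andbT /=; apply/existsP; exists x.
    by rewrite pf0 eqxx andbT.
  by rewrite cards1.
- move=> e; rewrite inE => /andP [_ /existsP [x /andP [cx /eqP pe]]].
  have /andP [_ ec] := pkP pe; exists x; by rewrite cx ec.
Qed.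

Unset Implicit Arguments.

Theorem mainTheorem4 (T : finType) (adj : rel T)
  (adj_sym : symmetric adj) (adj_irr : irreflexive adj)
  (M : {set {set T}}) (HM : max_two_matching adj M)
  (Hnosave : forall v0 : T, singleton M v0 -> ~ A_alt_path_saving adj M v0) :
  let s := #|[set x | singleton M x]| in
  [/\ (forall ps, path_cover adj ps -> s <= n_zero_paths ps),
      (exists ps, path_cover adj ps /\ n_zero_paths ps = s)
    & (forall D : {set {set T}}, D \subset M ->
        (forall x, is_cycle_comp M (mcomp M x) ->
           #|[set e in D | e \subset mcomp M x]| = 1) ->
        (forall e, e \in D ->
           exists x, is_cycle_comp M (mcomp M x) && (e \subset mcomp M x)) ->
        exists ps, [/\ path_cover adj ps, pc_edges ps = M :\: D
                     & n_zero_paths ps = s])].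
Proof.
case: HM => HM Mmax s.
have nbad : ~ bad adj M.
  by move=> b; have [v0 [sv sp]] := bad_saving adj_sym adj_irr HM b; exact: Hnosave v0 sv sp.
have P3 : forall D : {set {set T}}, D \subset M ->
        (forall x, is_cycle_comp M (mcomp M x) ->
           #|[set e in D | e \subset mcomp M x]| = 1) ->
        (forall e, e \in D ->
           exists x, is_cycle_comp M (mcomp M x) && (e \subset mcomp M x)) ->
        exists ps, [/\ path_cover adj ps, pc_edges ps = M :\: D
                     & n_zero_paths ps = s].
  by move=> D sDM h1 h2; have := part3 adj_sym adj_irr HM sDM h1 h2.
split => //.
- move=> ps cov; have [HF hF] := cover_F cov.
  apply: leq_trans hF.
  exact: (core adj_sym adj_irr HF (leqnn _) HM Mmax nbad).
- have [D [sDM h1 h2]] := part2D adj_sym adj_irr HM.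
  by have [ps [c1 _ c3]] := P3 D sDM h1 h2; exists ps.
Qed.
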